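(* Let $q\ge2$, $m\ge1$, $a$ a nonnegative integer and $R\in[m]$. Then $$\max_{{\boldsymbol y}\in\Sigma_{q,R}^m}\sum_{i=1}^{R}(r_i+a)\log_2(r_i+a)=(m-R+1+a)\log_2(m-R+1+a)+(R-1)(a+1)\log_2(a+1),$$ where $(r_1,\dots,r_R)$ denotes the run length profile of ${\boldsymbol y}$.
   Context: $\Sigma_q=\{0,\dots,q-1\}$. A run is a maximal block of identical consecutive symbols; the run length profile of ${\boldsymbol y}$ is the vector of its run lengths from left to right. $\Sigma_{q,R}^m$ is the set of sequences in $\Sigma_q^m$ with exactly $R$ runs. *)

(* Defs.v *)
From mathcomp Require Import all_boot all_order all_algebra.
From mathcomp Require Import all_classical all_reals all_analysis.
Set Implicit Arguments. Unset Strict Implicit. Unset Printing Implicit Defensive.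
Import Order.TTheory GRing.Theory Num.Theory.
Local Open Scope ring_scope.

Fixpoint rlp_aux (T : eqType) (x : T) (n : nat) (s : seq T) : seq nat :=
  match s with
  | [::] => [:: n]
  | y :: s' => if y == x then rlp_aux x n.+1 s' else n :: rlp_aux y 1 s'
  end.

Definition run_profile (T : eqType) (s : seq T) : seq nat :=
  match s with
  | [::] => [::]
  | x :: s' => rlp_aux x 1 s'
  end.

Definition nruns (T : eqType) (s : seq T) : nat := size (run_profile s).

Definition log2 {R : realType} (x : R) : R := ln x / ln 2.

(* Main.v *)
Require Import Defs.
From mathcomp Require Import all_boot all_order all_algebra.
From mathcomp Require Import all_classical all_reals all_analysis.
From mathcomp Require Import lra ring zify.
Import Order.TTheory GRing.Theory Num.Theory.
Local Open Scope ring_scope.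

Lemma rlp_pos (T : eqType) (s : seq T) : forall x n, (0 < n)%N ->
  all (fun r => 0 < r)%N (rlp_aux x n s).
Proof. elim: s => [|y s IH] x n n0 /=; first by rewrite n0. 
by case: ifP => _ /=; [apply: IH | rewrite n0 IH]. Qed.

Lemma rlp_sum (T : eqType) (s : seq T) : forall x n,
  sumn (rlp_aux x n s) = (n + size s)%N.
Proof. elim: s => [|y s IH] x n /=; first by rewrite !addn0.
by case: ifP => _ /=; rewrite IH; lia. Qed.

Lemma rlp_cons (T : eqType) (s : seq T) : forall x n,
  exists r t, rlp_aux x n s = r :: t.
Proof. elim: s => [|y s IH] x n /=; first by exists n, [::].
case: ifP => _ /=; first exact: IH. by exists n, (rlp_aux y 1 s). Qed.

Lemma rlp_size_sum (s : seq nat) : all (fun r => 0 < r)%N s -> (size s <= sumn s)%N.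
Proof. elim: s => //= r s IH /andP [r0 /IH]; lia. Qed.

Fixpoint alt (b : bool) (j : nat) : seq bool :=
  if j is j'.+1 then b :: alt (~~ b) j' else [::].

Lemma size_alt j : forall b, size (alt b j) = j.
Proof. by elim: j => //= j IH b; rewrite IH. Qed.

Lemma rlp_alt j : forall (b x : bool) n, x != b -> rlp_aux x n (alt b j) = n :: nseq j 1%N.
Proof.
elim: j => [|j IH] b x n hx //=.
rewrite eq_sym (negbTE hx) IH //. by case: b {hx}.
Qed.

Lemma rlp_nseq (T : eqType) (x : T) t : forall n s, rlp_aux x n (nseq t x ++ s) = rlp_aux x (n + t) s.
Proof. elim: t => [|t IH] n s /=; first by rewrite addn0. by rewrite eqxx IH addnS. Qed.

Lemma rlp_map (T U : eqType) (f : T -> U) : injective f ->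
  forall s x n, rlp_aux (f x) n (map f s) = rlp_aux x n s.
Proof. move=> fi; elim=> [|y s IH] x n //=. by rewrite (inj_eq fi); case: ifP => _; rewrite IH. Qed.

Definition gg (R : realType) (z : R) := z * log2 z.
Definition ff (R : realType) (a r : nat) := gg R ((r + a)%:R : R).

Lemma sum_nseq (R : realType) a j : \sum_(r <- nseq j 1%N) ff R a r = j%:R * ff R a 1.
Proof. elim: j => [|j IH]; first by rewrite big_nil mul0r.
by rewrite /= big_cons IH -natr1 mulrDl mul1r addrC. Qed.
Lemma tangent (R : realType) (x y : R) : 0 < x -> 0 < y ->
  x * ln x + (1 + ln x) * (y - x) <= y * ln y.
Proof.
move=> x0 y0.
have h : ln (x / y) <= x / y - 1.
  rewrite {1}(_ : x / y = 1 + (x / y - 1)); last by lra.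
  apply: le_ln1Dx. have : 0 < x / y by apply: divr_gt0. lra.
rewrite ln_div ?posrE // in h.
have h2 := ler_wpM2l (ltW y0) h.
have e : y * (x / y - 1) = x - y by rewrite mulrBr mulrCA divff ?mulr1 ?mulr1 // gt_eqF.
rewrite e in h2. nra.
Qed.

Lemma pair_ineq (R : realType) (g D : R -> R) :
  (forall x y, 0 < x -> 0 < y -> g x + D x * (y - x) <= g y) ->
  forall c p q, 0 < c -> c <= p -> c <= q -> g p + g q <= g (p + q - c) + g c.
Proof.
move=> T c p q c0 cp cq.
have p0 : 0 < p by lra. have q0 : 0 < q by lra.
have s0 : 0 < p + q - c by lra.
have T1 := T p c p0 c0. have T2 := T p _ p0 s0.
have T3 := T q c q0 c0. have T4 := T q _ q0 s0.
set gs := g (p + q - c) in T2 T4 *.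
set gc := g c in T1 T3 *. set gp := g p in T1 T2 *. set gq := g q in T3 T4 *.
set Dp := D p in T1 T2. set Dq := D q in T3 T4.
have k : (p + q - 2 * c) * (gp + gq) <= (p + q - 2 * c) * (gs + gc).
  have A : (q - c) * (gp + Dp * (c - p)) + (p - c) * (gp + Dp * (p + q - c - p))
      <= (q - c) * gc + (p - c) * gs.
    apply: lerD; apply: ler_wpM2l; lra.
  have B : (p - c) * (gq + Dq * (c - q)) + (q - c) * (gq + Dq * (p + q - c - q))
      <= (p - c) * gc + (q - c) * gs.
    apply: lerD; apply: ler_wpM2l; lra.
  have EA : (q - c) * (gp + Dp * (c - p)) + (p - c) * (gp + Dp * (p + q - c - p)) = (p + q - 2 * c) * gp.
    ring.
  have EB : (p - c) * (gq + Dq * (c - q)) + (q - c) * (gq + Dq * (p + q - c - q)) = (p + q - 2 * c) * gq.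
    ring.
  rewrite EA in A; rewrite EB in B. rewrite !mulrDr. lra.
have [pos|np] := ltP 0 (p + q - 2 * c).
  by rewrite -(ler_pM2l pos).
have ep : p = c by lra. have eq : q = c by lra.
rewrite /gs /gp /gq /gc -/(p + q - c) (_ : p + q - c = c); last by lra.
by rewrite ep eq.
Qed.

Lemma gg_tangent (R : realType) (x y : R) : 0 < x -> 0 < y ->
  gg R x + ((1 + ln x) / ln 2) * (y - x) <= gg R y.
Proof.
move=> x0 y0; have L0 : 0 < ln (2 : R) by apply: ln_gt0; lra.
have h := @tangent R x y x0 y0.
have Li : 0 <= (ln (2:R))^-1 by rewrite invr_ge0 ltW.
have h2 := ler_wpM2r Li h.
rewrite /gg /log2.
have -> : x * (ln x / ln 2) + (1 + ln x) / ln 2 * (y - x) =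
   (x * ln x + (1 + ln x) * (y - x)) * (ln 2)^-1 by ring.
by rewrite mulrA.
Qed.

Lemma pairN (R : realType) a (x y : nat) : (0 < x)%N -> (0 < y)%N ->
  ff R a x + ff R a y <= ff R a (x + y - 1) + ff R a 1.
Proof.
move=> x0 y0.
have e : (((x + y - 1 + a)%:R : R)) = (x + a)%:R + (y + a)%:R - (1 + a)%:R.
  apply/eqP; rewrite eq_sym subr_eq -!natrD; apply/eqP; congr (_%:R); lia.
rewrite /ff e.
apply: (@pair_ineq R (gg R) _ (@gg_tangent R)).
- by rewrite ltr0n; lia.
- by rewrite ler_nat; lia.
- by rewrite ler_nat; lia.
Qed.

Lemma seq_bound (R : realType) a (t : seq nat) : forall r,
  all (fun x => 0 < x)%N (r :: t) ->
  \sum_(x <- r :: t) ff R a x <= ff R a (sumn (r :: t) - size (r :: t) + 1) + (size t)%:R * ff R a 1.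
Proof.
elim: t => [|r' t IH] r.
  move=> /= /andP [r0 _]; rewrite big_cons big_nil addr0 mul0r addr0.
  by rewrite (_ : (r + 0 - 1 + 1 = r)%N) //; lia.
move=> /= /andP [r0 /andP [r'0 ht]].
have hs := @rlp_size_sum t ht.
rewrite big_cons.
have := IH r'; rewrite /= r'0 ht => /(_ isT) H.
apply: le_trans (lerD (lexx (ff R a r)) H) _.
rewrite addrA.
have y0 : (0 < r' + sumn t - (size t).+1 + 1)%N by lia.
have P := pairN R a _ _ r0 y0.
apply: le_trans (lerD P (lexx _)) _.
rewrite (_ : (r + (r' + sumn t - (size t).+1 + 1) - 1 = r + (r' + sumn t) - (size t).+2 + 1)%N); last by lia.
by rewrite -addrA -natr1 mulrDl mul1r (addrC (ff R a 1)).
Qed.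

Theorem lemma6 (R : realType) (q m a k : nat) :
  (2 <= q)%N -> (1 <= m)%N -> (1 <= k <= m)%N ->
  let F := fun y : m.-tuple 'I_q =>
    \sum_(r <- run_profile (tval y)) ((r + a)%:R * log2 ((r + a)%:R : R)) in
  let V := ((m - k + 1 + a)%:R * log2 ((m - k + 1 + a)%:R : R)
            + (k - 1)%:R * ((a + 1)%:R * log2 ((a + 1)%:R : R))) in
  (exists y : m.-tuple 'I_q, nruns (tval y) = k /\ F y = V) /\
  (forall y : m.-tuple 'I_q, nruns (tval y) = k -> F y <= V).
Proof.
move=> q2 m1 /andP [k1 km]; cbv zeta.
rewrite (_ : ((m - k + 1 + a)%:R * log2 ((m - k + 1 + a)%:R : R)
            + (k - 1)%:R * ((a + 1)%:R * log2 ((a + 1)%:R : R))) = ff R a (m - k + 1) + (k - 1)%:R * ff R a 1); last first.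
  by rewrite /ff /gg (addnC a 1).
split.
  case: q q2 => [//|q'] q2.
  pose fb (b : bool) : 'I_q'.+1 := inord (nat_of_bool b).
  have fbi : injective fb.
    move=> [] [] // /(congr1 val); rewrite /fb /= !inordK //=; lia.
  pose sb := nseq (m - k + 1) false ++ alt true (k - 1).
  have sz : size (map fb sb) == m.
    by rewrite size_map size_cat size_nseq size_alt; apply/eqP; lia.
  have rp : run_profile (map fb sb) = (m - k + 1)%N :: nseq (k - 1) 1%N.
    rewrite /sb (_ : (m - k + 1 = (m - k).+1)%N); last by lia.
    rewrite /= rlp_map // rlp_nseq rlp_alt //; congr (_ :: _); lia.
  exists (Tuple sz); rewrite /nruns /= rp /= size_nseq; split; first lia.
  rewrite big_cons.
  have := sum_nseq R a (k - 1). rewrite /ff /gg => ->. by [].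
move=> [s /eqP sz] /=; rewrite /nruns /= => nr.
case: s sz nr => [|x s'] sz nr; first by rewrite -sz in m1.
rewrite /= in nr *.
have [r [t e]] := rlp_cons _ s' x 1.
have hp := rlp_pos _ s' x 1 (isT : (0 < 1)%N).
have hs := rlp_sum _ s' x 1.
rewrite e in nr hp hs.
rewrite e.
have B := seq_bound R a _ _ hp.
rewrite hs nr /= in B.
have e1 : (size t = k - 1)%N by rewrite -nr /=; lia.
have e2 : (1 + size s' = m)%N by rewrite -sz.
rewrite e1 e2 in B; move: B; rewrite /ff /gg; exact: id.
Qed.
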